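(* For every boosted instance $I=(G,t,t^* )$ and every boost action $B=(q,\tau)$ with $\tau\ge t^*_q$, $\mathrm{Loss}(I,B)\le\tau$.
   Context: $G=(V,E,c)$ is an undirected graph with edge costs $c\ge0$; $\delta(S)$ denotes the edges with exactly one endpoint in $S$. Shadow moat growing on $(G,s)$, for $s:V\to\mathbb{R}_{\ge0}$: continuous process in time $\tau\ge0$ maintaining a forest (initially empty), its components, and $y_S\ge0$ (initially $0$); at time $\tau$ a component $C$ is active iff some $w\in C$ has $s_w>\tau$, and each active $C$ increases $y_C$ at rate $1$; an edge $e$ between different components with $\sum_{S:e\in\delta(S)}y_S=c_e$ is added and the components merge (ties processed by a fixed rule); stop when nothing is active. A boosted instance is $I=(G,t,t^* )$ with $t,t^*:V\to\mathbb{R}_{\ge0}$ and $t^*_v\ge t_v$ for all $v$. Run shadow moat growing on $(G,t^* )$; at each moment $\tau$, each active component $C$ contributes its growth to $y_{\mathrm{base}}$ if some $w\in C$ has $t_w>\tau$, and to $y_{\mathrm{add}}$ otherwise. A boost action $B=(q,\tau)$ with $\tau\ge t^*_q$ yields $\mathrm{WithBoost}(I,B)=(G,t,t^{*\prime})$ with $t^{*\prime}_q=\tau$ and $t^{*\prime}_v=t^*_v$ otherwise. With $(y_{\mathrm{base}},y_{\mathrm{add}})$ for $I$ and $(y'_{\mathrm{base}},y'_{\mathrm{add}})$ for $\mathrm{WithBoost}(I,B)$: $\mathrm{Win}(I,B)=y_{\mathrm{base}}-y'_{\mathrm{base}}$, $\mathrm{Loss}(I,B)=y'_{\mathrm{add}}-y_{\mathrm{add}}$.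 *)

(* Defs.v *)
From HB Require Import structures.
From mathcomp Require Import all_boot all_order all_algebra.
From mathcomp Require Import reals.
Set Implicit Arguments. Unset Strict Implicit. Unset Printing Implicit Defensive.
Import Order.TTheory GRing.Theory Num.Theory.
Local Open Scope ring_scope.

Section MoatGrowing.
Variables (R : realType) (V E : finType).
Variables (src dst : E -> V) (c : E -> R).

Definition cut (S : {set V}) (e : E) : bool := (src e \in S) != (dst e \in S).

Definition load (y : {ffun {set V} -> R}) (e : E) : R :=
  \sum_(S : {set V} | cut S e) y S.

Definition adjF (F : {set E}) : rel V := fun x z =>
  [exists e in F, ((src e == x) && (dst e == z)) || ((src e == z) && (dst e == x))].

Definition comp (F : {set E}) (v : V) : {set V} := [set u | connect (adjF F) v u].
Definition comps (F : {set E}) : {set {set V}} := [set comp F v | v : V].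

Definition crossing (F : {set E}) (e : E) : bool := comp F (src e) != comp F (dst e).
Definition tight (y : {ffun {set V} -> R}) (e : E) : bool := load y e == c e.

(* add every tight edge between different components; ties are processed by
   the fixed rule "in the order of enum E" *)
Definition addTight (y : {ffun {set V} -> R}) (F : {set E}) : {set E} :=
  foldl (fun F e => if crossing F e && tight y e then e |: F else F) F (enum E).

Definition activeAt (s : V -> R) (tm : R) (C : {set V}) : bool :=
  [exists w in C, tm < s w].

Definition seqmin (l : seq R) : R := foldr Num.min (head 0 l) l.

Record mstate := MS {
  ms_time : R;
  ms_F : {set E};
  ms_y : {ffun {set V} -> R};
  ms_base : R;
  ms_add : R
}.

(* One event-to-event step of shadow moat growing on (G, ts), with the
   base/additional accounting w.r.t. tb (ts = t*, tb = t). *)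
Definition step (ts tb : V -> R) (st : mstate) : mstate :=
  let tm := ms_time st in
  let y := ms_y st in
  let F := addTight y (ms_F st) in
  let act := activeAt ts tm in
  let rate (e : E) : nat := (act (comp F (src e)) : nat) + (act (comp F (dst e)) : nat) in
  if ~~ [exists v, act (comp F v)] then MS tm F y (ms_base st) (ms_add st) else
  let cands :=
    [seq ts w - tm | w <- enum V & tm < ts w] ++
    [seq tb w - tm | w <- enum V & tm < tb w] ++
    [seq (c e - load y e) / (rate e)%:R | e <- enum E & crossing F e && (0 < rate e)%N] in
  let d := seqmin cands in
  let y' := [ffun S => if (S \in comps F) && act S then y S + d else y S] in
  let nb := #|[set C in comps F | act C && activeAt tb tm C]| in
  let na := #|[set C in comps F | act C && ~~ activeAt tb tm C]| in
  MS (tm + d) F y' (ms_base st + d * nb%:R) (ms_add st + d * na%:R).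

Definition init_state : mstate := MS 0 set0 [ffun => 0] 0 0.

(* The number of event steps is at most 2|V| (threshold times) + |V|-1
   (merges), plus one final step detecting that nothing is active. *)
Definition run (ts tb : V -> R) : mstate :=
  iter (3 * #|V|).+1 (step ts tb) init_state.

Definition y_base (t tstar : V -> R) : R := ms_base (run tstar t).
Definition y_add (t tstar : V -> R) : R := ms_add (run tstar t).

Definition boost (tstar : V -> R) (q : V) (tau : R) : V -> R :=
  fun v => if v == q then tau else tstar v.

Definition Win (t tstar : V -> R) (q : V) (tau : R) : R :=
  y_base t tstar - y_base t (boost tstar q tau).
Definition Loss (t tstar : V -> R) (q : V) (tau : R) : R :=
  y_add t (boost tstar q tau) - y_add t tstar.

End MoatGrowing.

(* Main.v *)
From HB Require Import structures.
From mathcomp Require Import all_boot all_order all_algebra.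
From mathcomp Require Import reals.
From mathcomp Require Import ring lra zify.
Require Import Defs.
Import Order.TTheory GRing.Theory Num.Theory.
Local Open Scope ring_scope.
Set Implicit Arguments. Unset Strict Implicit. Unset Printing Implicit Defensive.

Section Graph.
Variables (V E : finType) (src dst : E -> V).
Local Notation adj F := (adjF src dst F).
Local Notation cmp F := (comp src dst F).
Implicit Types (F : {set E}) (C : {set V}).

Lemma adj_sym F : symmetric (adj F).
Proof. by move=> x z; rewrite /adjF; apply: eq_existsb => e; rewrite orbC. Qed.

Lemma csym F : connect_sym (adj F).
Proof. exact: sym_connect_sym (adj_sym F). Qed.

Lemma in_comp F u v : (u \in cmp F v) = connect (adj F) v u.
Proof. by rewrite inE. Qed.

Lemma comp_eq F u v : (cmp F u == cmp F v) = connect (adj F) u v.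
Proof.
apply/eqP/idP => [H|H].
  have : u \in cmp F u by rewrite in_comp connect0.
  by rewrite H in_comp csym.
by apply/setP => w; rewrite !in_comp (same_connect (csym F) H).
Qed.

Lemma mem_comp F u v : (u \in cmp F v) = (cmp F u == cmp F v).
Proof. by rewrite in_comp comp_eq csym. Qed.

Lemma comp_self F v : v \in cmp F v.
Proof. by rewrite in_comp connect0. Qed.

Lemma cut_comp F v e :
  cut src dst (cmp F v) e = ((cmp F (src e) == cmp F v) != (cmp F (dst e) == cmp F v)).
Proof. by rewrite /cut !mem_comp. Qed.

Lemma crossingE F e : crossing src dst F e = (cmp F (src e) != cmp F (dst e)).
Proof. by []. Qed.

Definition coarse F F' := forall u v, connect (adj F) u v -> connect (adj F') u v.

Lemma coarse_edges F F' :
  (forall e, e \in F -> connect (adj F') (src e) (dst e)) -> coarse F F'.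
Proof.
move=> H; apply: connect_sub => x z /existsP [e /andP [eF /orP [] /andP [/eqP ex /eqP ez]]].
  by rewrite -ex -ez; apply: H.
by rewrite -ex -ez csym; apply: H.
Qed.

Lemma coarse_sub F F' : F \subset F' -> coarse F F'.
Proof.
move=> sFF'; apply: coarse_edges => e eF; apply: connect1.
by apply/existsP; exists e; rewrite (subsetP sFF' _ eF) !eqxx.
Qed.

Lemma coarse_trans F1 F2 F3 : coarse F1 F2 -> coarse F2 F3 -> coarse F1 F3.
Proof. by move=> H1 H2 u v /H1 /H2. Qed.

Lemma coarse_refl F : coarse F F.
Proof. by []. Qed.

Lemma coarse_comp F F' u v : coarse F F' -> u \in cmp F v -> u \in cmp F' v.
Proof. by move=> H; rewrite !in_comp; apply: H. Qed.

Lemma coarse_crossing F F' e : coarse F F' -> crossing src dst F' e -> crossing src dst F e.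
Proof.
move=> H; rewrite !crossingE !comp_eq; apply: contra; exact: H.
Qed.

Definition cproj F' (C : {set V}) : {set V} := \bigcup_(v in C) cmp F' v.

Lemma cproj_comp F F' v : coarse F F' -> cproj F' (cmp F v) = cmp F' v.
Proof.
move=> H; apply/setP => w; apply/bigcupP/idP => [[u uC wu]|wv].
  rewrite mem_comp in wu; rewrite mem_comp (eqP wu) comp_eq; apply: H.
  by rewrite -comp_eq -mem_comp.
by exists v; rewrite ?comp_self.
Qed.

Lemma comps_proj F F' : coarse F F' -> comps src dst F' = cproj F' @: comps src dst F.
Proof.
move=> H; apply/setP => C; apply/imsetP/imsetP => [[v _ ->]|[C' /imsetP [v _ ->] ->]].
  by exists (cmp F v); [apply/imsetP; exists v | rewrite cproj_comp].
by exists v => //; rewrite cproj_comp.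
Qed.

Lemma card_comps_le F F' : coarse F F' -> (#|comps src dst F'| <= #|comps src dst F|)%N.
Proof. by move=> H; rewrite (comps_proj H) leq_imset_card. Qed.

Lemma card_comps_lt F F' e : coarse F F' -> crossing src dst F e ->
  ~~ crossing src dst F' e -> (#|comps src dst F'| < #|comps src dst F|)%N.
Proof.
move=> H cr ncr; rewrite (comps_proj H) ltn_neqAle leq_imset_card andbT.
apply/negP => /imset_injP inj.
move: cr; rewrite crossingE => /eqP; apply; apply: inj.
- by apply/imsetP; exists (src e).
- by apply/imsetP; exists (dst e).
by rewrite !cproj_comp //; move: ncr; rewrite crossingE negbK => /eqP.
Qed.

Lemma card_comps_V F : (#|comps src dst F| <= #|V|)%N.
Proof. exact: leq_imset_card. Qed.

End Graph.

Section Run.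
Variables (R : realType) (V E : finType) (src dst : E -> V) (c : E -> R).
Local Notation adj F := (adjF src dst F).
Local Notation cmp F := (comp src dst F).
Local Notation crossing := (crossing src dst).
Local Notation comps := (comps src dst).
Local Notation cut := (cut src dst).
Local Notation load := (load src dst).
Local Notation tight := (tight src dst c).
Local Notation addTight := (addTight src dst c).
Implicit Types (F : {set E}) (C : {set V}) (y : {ffun {set V} -> R}).

Lemma noncross_in F e : e \in F -> ~~ crossing F e.
Proof.
move=> eF; rewrite crossingE negbK comp_eq; apply: connect1.
by apply/existsP; exists e; rewrite eF !eqxx.
Qed.

Lemma addTight_gen y (l : seq E) F :
  let G := foldl (fun F e => if crossing F e && tight y e then e |: F else F) F l in
  [/\ F \subset G, (forall e, e \in l -> crossing G e -> ~~ tight y e) &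
      (forall e, e \in G -> (e \in F) || tight y e)].
Proof.
elim: l F => [|a l IH] F /=.
  by split; [exact: subxx | by [] | move=> e ->].
set F1 := (if _ then _ else _).
have [s1 H1 H2] := IH F1.
have sF : F \subset F1 by rewrite /F1; case: ifP => // _; apply: subsetUr.
split.
- exact: subset_trans sF s1.
- move=> e; rewrite inE => /orP [/eqP ->|el]; last exact: H1.
  move=> cr; have crF := coarse_crossing (coarse_sub s1) cr.
  move: crF; rewrite /F1; case: ifP => [_|]; first by rewrite (negPf (noncross_in (setU11 a F))).
  by move=> h crF; rewrite crF /= in h; rewrite h.
- move=> e /H2 /orP [|->]; last by rewrite orbT.
  rewrite /F1; case: ifP => [/andP [_ ta]|_ ->//].
  by case/setU1P => [->|->]; rewrite ?ta ?orbT.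
Qed.

Lemma addTight_sub y F : F \subset addTight y F.
Proof. by have [] := addTight_gen y (enum E) F. Qed.

Lemma addTight_nocross y F e : crossing (addTight y F) e -> ~~ tight y e.
Proof. by have [_ H _] := addTight_gen y (enum E) F; apply: H; rewrite mem_enum. Qed.

Lemma addTight_in y F e : e \in addTight y F -> (e \in F) || tight y e.
Proof. by have [_ _ H] := addTight_gen y (enum E) F; apply: H. Qed.

Lemma load_upd y F (P : pred {set V}) (d : R) e :
  load [ffun S => if (S \in comps F) && P S then y S + d else y S] e =
  load y e + d * (#|[set S in comps F | P S && cut S e]|)%:R.
Proof.
rewrite /Defs.load.
have -> : \sum_(S | cut S e) [ffun S => if (S \in comps F) && P S then y S + d else y S] S
   = \sum_(S | cut S e) (y S + d * ((S \in comps F) && P S : nat)%:R).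
  by apply: eq_bigr => S _; rewrite ffunE; case: ifP => _; rewrite ?mulr1 ?mulr0 ?addr0.
rewrite big_split /= -mulr_sumr -natr_sum; congr (_ + d * _%:R).
rewrite -sum1_card big_mkcond /= [RHS]big_mkcond /=; apply: eq_bigr => S _.
by rewrite inE; case: (cut S e); case: (S \in comps F); case: (P S).
Qed.

Lemma rate_cross F (P : pred {set V}) e : crossing F e ->
  #|[set S in comps F | P S && cut S e]| = (P (cmp F (src e)) + P (cmp F (dst e)))%N.
Proof.
rewrite crossingE => cr.
have -> : [set S in comps F | P S && cut S e] =
   [set S | (S == cmp F (src e)) && P S] :|: [set S | (S == cmp F (dst e)) && P S].
  apply/setP => S; rewrite !inE; apply/idP/idP.
    case/andP => /imsetP [v _ ->] /andP [Pv]; rewrite cut_comp.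
    rewrite ![cmp F v == _]eq_sym Pv ?andbT.
    by case: (cmp F (src e) == cmp F v); case: (cmp F (dst e) == cmp F v).
  case/orP => /andP [/eqP -> PS]; rewrite PS /=; (apply/andP; split; first by apply/imsetP; eexists).
    by rewrite cut_comp eqxx [cmp F (dst e) == _]eq_sym (negPf cr).
  by rewrite cut_comp eqxx (negPf cr).
rewrite cardsU.
have -> : [set S | (S == cmp F (src e)) && P S] :&: [set S | (S == cmp F (dst e)) && P S] = set0.
  apply/setP => S; rewrite !inE; apply/negP => /andP [/andP [/eqP -> _] /andP [/eqP h _]].
  by rewrite h eqxx in cr.
rewrite cards0 subn0.
have h x : #|[set S | (S == x) && P S]| = P x.
  case Px: (P x) => /=.
    rewrite (_ : [set S | (S == x) && P S] = [set x]) ?cards1 //.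
    by apply/setP => S; rewrite !inE; case: eqP => // ->.
  by apply/eqP; rewrite cards_eq0; apply/eqP/setP => S; rewrite !inE; case: eqP => // ->; rewrite Px.
by rewrite !h.
Qed.

Lemma rate_nocross F (P : pred {set V}) e : ~~ crossing F e ->
  #|[set S in comps F | P S && cut S e]| = 0%N.
Proof.
rewrite crossingE negbK => /eqP cr; apply/eqP; rewrite cards_eq0; apply/eqP/setP => S.
rewrite !inE; apply/negP => /andP [/imsetP [v _ ->] /andP [_]].
by rewrite cut_comp cr eqxx.
Qed.

Lemma load0 e : load [ffun => 0 : R] e = 0.
Proof. by rewrite /Defs.load big1 // => S _; rewrite ffunE. Qed.

Lemma foldr_min_le (a : R) l x : x \in l -> foldr Num.min a l <= x.
Proof.
elim: l => //= b l IH; rewrite inE => /orP [/eqP ->|/IH h].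
  by rewrite ge_min lexx.
by rewrite ge_min h orbT.
Qed.

Lemma foldr_min_mem (a : R) l : foldr Num.min a l \in a :: l.
Proof.
elim: l => [|b l IH] /=; first by rewrite inE.
rewrite minEle; case: ifP => _; first by rewrite !inE eqxx orbT.
by move: IH; rewrite !inE => /orP [->|->]; rewrite ?orbT.
Qed.

Lemma seqmin_le (l : seq R) x : x \in l -> seqmin l <= x.
Proof. exact: foldr_min_le. Qed.

Lemma seqmin_mem (l : seq R) : l != [::] -> seqmin l \in l.
Proof.
case: l => // a l _; have := foldr_min_mem a (a :: l).
by rewrite /seqmin /= inE => /orP [/eqP ->|//]; rewrite inE eqxx.
Qed.

End Run.

Section OneRun.
Variables (R : realType) (V E : finType) (src dst : E -> V) (c : E -> R).
Hypothesis c_ge0 : forall e, 0 <= c e.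
Variables (ts tb : V -> R).
Local Notation adj F := (adjF src dst F).
Local Notation cmp F := (comp src dst F).
Local Notation crossing := (crossing src dst).
Local Notation comps := (comps src dst).
Local Notation cut := (cut src dst).
Local Notation load := (load src dst).
Local Notation tight := (tight src dst c).
Local Notation addTight := (addTight src dst c).
Implicit Types (F : {set E}) (C : {set V}) (y : {ffun {set V} -> R}).

Definition st k := iter k (step src dst c ts tb) (init_state R V E).
Definition T k := ms_time (st k).
Definition Y k := ms_y (st k).
Definition F0 k := ms_F (st k).
Definition Fk k := addTight (Y k) (F0 k).
Definition act k := activeAt ts (T k).
Definition A k := [exists v, act k (cmp (Fk k) v)].
Definition rate k e : nat := (act k (cmp (Fk k) (src e)) : nat) + (act k (cmp (Fk k) (dst e)) : nat).
Definition cands k :=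
    [seq ts w - T k | w <- enum V & T k < ts w] ++
    [seq tb w - T k | w <- enum V & T k < tb w] ++
    [seq (c e - load (Y k) e) / (rate k e)%:R | e <- enum E & crossing (Fk k) e && (0 < rate k e)%N].
Definition dd k := if A k then seqmin (cands k) else 0.
Definition rho k e : R := if A k then (#|[set S in comps (Fk k) | act k S && cut S e]|)%:R else 0.
Definition na k := #|[set C in comps (Fk k) | act k C && ~~ activeAt tb (T k) C]|.
Definition add k := ms_add (st k).

Lemma stepE k :
  [/\ T k.+1 = T k + dd k, F0 k.+1 = Fk k,
      Y k.+1 = (if A k then [ffun S => if (S \in comps (Fk k)) && act k S then Y k S + dd k else Y k S]
                else Y k)
    & add k.+1 = add k + dd k * (if A k then (na k)%:R else 0)].
Proof.
rewrite /T /F0 /Y /add.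
have -> : st k.+1 = step src dst c ts tb (st k) by rewrite /st iterS.
rewrite /step /= -/(T k) -/(Y k) -/(F0 k) -/(Fk k) -/(act k) -/(rate k) -/(A k) -/(cands k) -/(na k).
rewrite /dd.
by case HA: (A k) => /=; split; rewrite ?mulr0 ?addr0.
Qed.

Lemma T0 : T 0 = 0. Proof. by []. Qed.
Lemma Y0 : Y 0 = [ffun => 0]. Proof. by []. Qed.
Lemma F00 : F0 0 = set0. Proof. by []. Qed.
Lemma add0' : add 0 = 0. Proof. by []. Qed.

Lemma AE k : A k = [exists w, T k < ts w].
Proof.
apply/existsP/existsP => [[v /existsP [w /andP [_ h]]]|[w h]]; first by exists w.
by exists w; apply/existsP; exists w; rewrite comp_self.
Qed.

Lemma loadS k e : load (Y k.+1) e = load (Y k) e + dd k * rho k e.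
Proof.
have [_ _ -> _] := stepE k; rewrite /rho /dd; case: (A k); last by rewrite mulr0 addr0.
exact: load_upd.
Qed.

Lemma rho_cross k e : A k -> crossing (Fk k) e -> rho k e = (rate k e)%:R.
Proof. by move=> HA cr; rewrite /rho HA rate_cross. Qed.

Lemma rho_nocross k e : ~~ crossing (Fk k) e -> rho k e = 0.
Proof. by move=> cr; rewrite /rho rate_nocross //; case: (A k). Qed.

Lemma rho_ge0 k e : 0 <= rho k e.
Proof. by rewrite /rho; case: (A k). Qed.

Lemma cands_ne k : A k -> cands k != [::].
Proof.
rewrite AE => /existsP [w h]; rewrite /cands.
have : ts w - T k \in [seq ts w - T k | w <- enum V & T k < ts w].
  by apply: map_f; rewrite mem_filter h mem_enum.
by case: [seq _ | _ <- _ & _].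
Qed.

Lemma crossF0 k e : crossing (Fk k) e -> crossing (F0 k) e.
Proof. exact/coarse_crossing/coarse_sub/addTight_sub. Qed.

Lemma dd_edge_aux k e : (forall e, crossing (F0 k) e -> load (Y k) e <= c e) ->
  crossing (Fk k) e -> load (Y k) e < c e.
Proof.
move=> H cr; rewrite lt_neqAle H ?crossF0 // andbT.
exact: (addTight_nocross cr).
Qed.

Lemma cand_pos k x : (forall e, crossing (F0 k) e -> load (Y k) e <= c e) ->
  x \in cands k -> 0 < x.
Proof.
move=> H; rewrite /cands !mem_cat => /or3P [] /mapP [z]; rewrite mem_filter.
- by case/andP => h _ ->; rewrite subr_gt0.
- by case/andP => h _ ->; rewrite subr_gt0.
- case/andP => /andP [cr r] _ ->; apply: divr_gt0; first by rewrite subr_gt0 dd_edge_aux.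
  by rewrite ltr0n.
Qed.

Lemma inv_le k : forall e, crossing (F0 k) e -> load (Y k) e <= c e.
Proof.
elim: k => [|k IH] e.
  by rewrite Y0 load0.
have [_ -> _ _] := stepE k => cr; rewrite loadS.
have lt := dd_edge_aux IH cr.
case HA: (A k); last by rewrite /dd HA mul0r addr0 ltW.
rewrite rho_cross //.
case r0: (rate k e == 0)%N; first by rewrite (eqP r0) mulr0 addr0 ltW.
have rp : (0 < rate k e)%N by rewrite lt0n r0.
have : dd k <= (c e - load (Y k) e) / (rate k e)%:R.
  rewrite /dd HA; apply: seqmin_le; rewrite /cands !mem_cat; apply/or3P; apply: Or33.
  by apply: map_f; rewrite mem_filter cr rp mem_enum.
rewrite ler_pdivlMr ?ltr0n // => h; rewrite -lerBrDl; exact: h.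
Qed.

Lemma load_lt k e : crossing (Fk k) e -> load (Y k) e < c e.
Proof. exact: dd_edge_aux (@inv_le k). Qed.

Lemma dd_pos k : A k -> 0 < dd k.
Proof. move=> HA; rewrite /dd HA; apply: (cand_pos (@inv_le k)); exact: seqmin_mem (cands_ne HA). Qed.

Lemma dd_ge0 k : 0 <= dd k.
Proof. by case HA: (A k); [exact/ltW/dd_pos | rewrite /dd HA]. Qed.

Lemma dd_ts k w : T k < ts w -> dd k <= ts w - T k.
Proof.
move=> h; rewrite /dd; case: ifP => _; last by rewrite subr_ge0 ltW.
apply: seqmin_le; rewrite /cands !mem_cat; apply/or3P; apply: Or31.
by apply: map_f; rewrite mem_filter h mem_enum.
Qed.

Lemma dd_tb k w : T k < tb w -> dd k <= tb w - T k.
Proof.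
move=> h; rewrite /dd; case: ifP => _; last by rewrite subr_ge0 ltW.
apply: seqmin_le; rewrite /cands !mem_cat; apply/or3P; apply: Or32.
by apply: map_f; rewrite mem_filter h mem_enum.
Qed.

Lemma load_step_le k e : crossing (Fk k) e -> load (Y k) e + dd k * rho k e <= c e.
Proof. by move=> cr; rewrite -loadS; apply: inv_le; have [_ -> _ _] := stepE k. Qed.

Lemma load_inside k e s : crossing (Fk k) e -> T k <= s -> (s < T k.+1 \/ ~~ A k) ->
  load (Y k) e + (s - T k) * rho k e < c e.
Proof.
move=> cr h1 [h2|nA]; last by rewrite /rho (negPf nA) mulr0 addr0 load_lt.
have lt := load_lt cr; have le := load_step_le cr.
case r0: (rho k e == 0); first by rewrite (eqP r0) mulr0 addr0.
have rp : 0 < rho k e by rewrite lt_neqAle eq_sym r0 rho_ge0.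
have [eT _ _ _] := stepE k; rewrite eT in h2.
have h3 : (s - T k) * rho k e < dd k * rho k e by rewrite ltr_pM2r //; lra.
lra.
Qed.


Lemma TS k : T k.+1 = T k + dd k. Proof. by have [] := stepE k. Qed.
Lemma F0S k : F0 k.+1 = Fk k. Proof. by have [] := stepE k. Qed.

Lemma T_mono k : T k <= T k.+1.
Proof. by rewrite TS lerDl dd_ge0. Qed.

Lemma T_ge0 k : 0 <= T k.
Proof. elim: k => [|k IH]; first by rewrite T0. exact: le_trans IH (T_mono k). Qed.

Lemma const_ts k s w : T k <= s -> s < T k.+1 -> (T k < ts w) = (s < ts w).
Proof.
move=> h1 h2; apply/idP/idP => h; last by apply: le_lt_trans h.
have := dd_ts h; rewrite TS in h2; lra.
Qed.

Lemma const_tb k s w : T k <= s -> s < T k.+1 -> (T k < tb w) = (s < tb w).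
Proof.
move=> h1 h2; apply/idP/idP => h; last by apply: le_lt_trans h.
have := dd_tb h; rewrite TS in h2; lra.
Qed.

Lemma inactive_step k : ~~ A k -> [/\ ~~ A k.+1, add k.+1 = add k & T k.+1 = T k].
Proof.
move=> nA; have [eT _ _ eA] := stepE k.
have eT' : T k.+1 = T k by rewrite eT /dd (negPf nA) addr0.
split => //; last by rewrite eA /dd (negPf nA) mul0r addr0.
by move: nA; rewrite !AE eT'.
Qed.

Lemma inactive_after k m : ~~ A k -> (k <= m)%N -> [/\ ~~ A m, add m = add k & T m = T k].
Proof.
move=> nA; elim: m => [|m IH]; first by rewrite leqn0 => /eqP kz; subst k; split.
rewrite leq_eqVlt => /orP [/eqP <-|]; first by split.
rewrite ltnS => /IH [nAm eA eT]; have [] := inactive_step nAm.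
by move=> ? -> ->.
Qed.

Definition thr k := (#|[set w | (T k < ts w)%R]| + #|[set w | (T k < tb w)%R]|)%N.
Definition nc k := #|comps (F0 k)|.
Definition aa k := [exists e, crossing (F0 k) e && tight (Y k) e].
Definition nu k := (thr k + nc k + ~~ aa k)%N.

Lemma nc_Fk k : (#|comps (Fk k)| + aa k <= nc k)%N.
Proof.
have co := @coarse_sub V E src dst _ _ (@addTight_sub _ _ _ src dst c (Y k) (F0 k)).
case: (boolP (aa k)) => [/existsP [e /andP [cr ti]]|_]; last by rewrite addn0 /nc /Fk card_comps_le.
rewrite addn1 /nc /Fk; apply: (card_comps_lt co cr).
by apply: contraL ti => /addTight_nocross.
Qed.

Lemma thr_sub k (P : V -> R) : [set w | T k.+1 < P w] \subset [set w | T k < P w].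
Proof. by apply/subsetP => w; rewrite !inE => h; apply: le_lt_trans (T_mono k) h. Qed.

Lemma strict_thr k (P : V -> R) w : T k < P w -> T k.+1 = P w ->
  (#|[set w | (T k.+1 < P w)%R]| < #|[set w | (T k < P w)%R]|)%N.
Proof.
move=> h1 h2; apply: proper_card; apply/properP; split; first exact: thr_sub.
by exists w; rewrite !inE ?h1 // h2 ltxx.
Qed.

Lemma nu_dec k : A k -> (nu k.+1 < nu k)%N.
Proof.
move=> HA; have := nc_Fk k; rewrite /nu /nc F0S.
have s1 := subset_leq_card (thr_sub k ts); have s2 := subset_leq_card (thr_sub k tb).
have := seqmin_mem (cands_ne HA).
have dmem : dd k = seqmin (cands k) by rewrite /dd HA.
rewrite -dmem /cands !mem_cat => /or3P [] /mapP [z]; rewrite mem_filter.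
- case/andP => h _ eq; have e1 : T k.+1 = ts z by rewrite TS eq addrC subrK.
  have := strict_thr h e1.
  rewrite /thr; case: (aa k); case: (aa k.+1) => /=; lia.
- case/andP => h _ eq; have e1 : T k.+1 = tb z by rewrite TS eq addrC subrK.
  have := strict_thr h e1.
  rewrite /thr; case: (aa k); case: (aa k.+1) => /=; lia.
- case/andP => /andP [cr rp] _ eq.
  have ti : aa k.+1.
    apply/existsP; exists z; rewrite F0S cr /= /Defs.tight loadS rho_cross // eq.
    rewrite mulrAC -mulrA divff ?mulr1 ?pnatr_eq0 -?lt0n // addrC subrK //.
  rewrite ti /thr; case: (aa k) => /=; lia.
Qed.

Lemma nu_ge2 k : A k -> (2 <= nu k)%N.
Proof.
rewrite AE => /existsP [w h].
have h1 : (0 < #|[set w | (T k < ts w)%R]|)%N by apply/card_gt0P; exists w; rewrite inE.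
have h2 : (0 < nc k)%N by apply/card_gt0P; exists (cmp (F0 k) w); apply/imsetP; exists w.
rewrite /nu /thr; lia.
Qed.

Lemma nu0 : (nu 0 <= 3 * #|V| + 1)%N.
Proof.
have h1 : (#|[set w | (T 0 < ts w)%R]| <= #|V|)%N := max_card _.
have h2 : (#|[set w | (T 0 < tb w)%R]| <= #|V|)%N := max_card _.
have h3 := card_comps_V src dst (F0 0).
rewrite /nu /thr /nc; move: h1 h2 h3; set n := #|V|; set n1 := #|V|; set n2 := #|V|; case: (aa 0) => /=; lia.
Qed.

Lemma A_prev k j : A k -> (j <= k)%N -> A j.
Proof. move=> HA jk; case: (boolP (A j)) => // nA; have [h _ _] := inactive_after nA jk. by rewrite HA in h. Qed.

Lemma term k : A k -> (k < 3 * #|V|)%N.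
Proof.
have H : forall k, A k -> (nu k + k <= nu 0)%N.
  elim => [|m IH] HA; first by rewrite addn0.
  have HA' := A_prev HA (leqnSn m); have := IH HA'; have := nu_dec HA'; lia.
move=> HA; have := H k HA; have := nu_ge2 HA; have := nu0; lia.
Qed.

Lemma run_add : ms_add (run src dst c ts tb) = add (3 * #|V|).+1.
Proof. by []. Qed.

End OneRun.

Section Coupling.
Variables (R : realType) (V E : finType) (src dst : E -> V) (c : E -> R).
Hypothesis c_ge0 : forall e, 0 <= c e.
Variables (ts ts' tb : V -> R) (q : V) (tau : R).
Hypothesis H1 : forall w, ts w <= ts' w.
Hypothesis H2 : forall w, w != q -> ts' w = ts w.
Hypothesis H3 : ts' q = tau.
Hypothesis tau_ge0 : 0 <= tau.
Local Notation cmp F := (comp src dst F).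
Local Notation crossing := (crossing src dst).
Local Notation comps := (comps src dst).
Local Notation load := (load src dst).
Local Notation coarse := (coarse src dst).
Local Notation T1 := (T src dst c ts tb).
Local Notation T2 := (T src dst c ts' tb).
Local Notation A1 := (A src dst c ts tb).
Local Notation A2 := (A src dst c ts' tb).
Local Notation Y1 := (Y src dst c ts tb).
Local Notation Y2 := (Y src dst c ts' tb).
Local Notation F1 := (Fk src dst c ts tb).
Local Notation F2 := (Fk src dst c ts' tb).
Local Notation rho1 := (rho src dst c ts tb).
Local Notation rho2 := (rho src dst c ts' tb).
Local Notation dd1 := (dd src dst c ts tb).
Local Notation dd2 := (dd src dst c ts' tb).
Local Notation add1 := (add src dst c ts tb).
Local Notation add2 := (add src dst c ts' tb).
Local Notation na1 := (na src dst c ts tb).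
Local Notation na2 := (na src dst c ts' tb).

Definition Ns (P : V -> R) (F : {set E}) (s : R) :=
  #|[set C in comps F | activeAt P s C && ~~ activeAt tb s C]|.

Lemma na_cmp F F' s : coarse F F' ->
  (Ns ts' F' s <= Ns ts F s + ((s < tau)%R : nat))%N.
Proof.
move=> co; rewrite /Ns.
set B := [set C in comps F' | _].
set A0 := [set C in comps F | _].
have sub : B \subset cproj src dst F' @: A0 :|: (if s < tau then [set cmp F' q] else set0).
  apply/subsetP => C; rewrite inE => /andP [/imsetP [v _ ->] /andP [/existsP [w /andP [wC sw]] nb]].
  case: (eqVneq w q) => [wq|wq].
    rewrite wq H3 in sw; rewrite wq in wC; rewrite sw !inE; apply/orP; right.
    by rewrite mem_comp eq_sym in wC.
  apply/setUP; left; apply/imsetP; exists (cmp F w).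
    rewrite inE; apply/andP; split; first by apply/imsetP; exists w.
    apply/andP; split; first by apply/existsP; exists w; rewrite comp_self -(H2 wq).
    apply: contra nb => /existsP [u /andP [uC su]]; apply/existsP; exists u.
    rewrite su andbT; move: (coarse_comp co uC); rewrite !mem_comp => /eqP ->.
    by rewrite -mem_comp.
  by rewrite cproj_comp //; apply/eqP; rewrite eq_sym -mem_comp.
apply: (leq_trans (subset_leq_card sub)); rewrite cardsU.
apply: (leq_trans (leq_subr _ _)); apply: leq_add; first exact: leq_imset_card.
by case: (s < tau); rewrite ?cards1 ?cards0.
Qed.

Lemma act_lift F F' s v : coarse F F' ->
  activeAt ts s (cmp F v) -> activeAt ts' s (cmp F' v).
Proof.
move=> co /existsP [w /andP [wC sw]]; apply/existsP; exists w.
by rewrite (coarse_comp co wC) (lt_le_trans sw (H1 w)).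
Qed.

Lemma activeAt_const (P : V -> R) t1 t2 C :
  (forall w, (t1 < P w) = (t2 < P w)) -> activeAt P t1 C = activeAt P t2 C.
Proof. by move=> h; apply: eq_existsb => w; rewrite h. Qed.

Definition nar1 k : R := if A1 k then (na1 k)%:R else 0.
Definition nar2 k : R := if A2 k then (na2 k)%:R else 0.

Definition W k j s :=
  [/\ [/\ T1 k <= s, A1 k -> s <= T1 k.+1, T2 j <= s, A2 j -> s <= T2 j.+1 &
         (k <= 3 * #|V|)%N /\ (j <= 3 * #|V|)%N],
      coarse (F1 k) (F2 j),
      forall e, crossing (F2 j) e ->
        load (Y1 k) e + (s - T1 k) * rho1 k e <= load (Y2 j) e + (s - T2 j) * rho2 j e &
      add2 j + (s - T2 j) * nar2 j <= add1 k + (s - T1 k) * nar1 k + Num.min s tau].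

Definition Inv k j s := W k j s /\ (A1 k -> s < T1 k.+1) /\ (A2 j -> s < T2 j.+1).

Lemma inactive_all (P tb' : V -> R) k w : ~~ A src dst c P tb' k -> P w <= T src dst c P tb' k.
Proof. by rewrite AE negb_exists => /forallP /(_ w); rewrite -leNgt. Qed.

Lemma nar_Ns (P : V -> R) k s :
  T src dst c P tb k <= s -> (A src dst c P tb k -> s < T src dst c P tb k.+1) ->
  (if A src dst c P tb k then (na src dst c P tb k)%:R else 0) = (Ns P (Fk src dst c P tb k) s)%:R :> R.
Proof.
move=> h1 h2; case: (boolP (A src dst c P tb k)) => HA.
  have h2' := h2 HA; congr (_%:R); rewrite /na /Ns /act; apply: eq_card => C; rewrite !inE.
  by rewrite (activeAt_const _ (fun w => const_ts w h1 h2')) (activeAt_const _ (fun w => const_tb w h1 h2')).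
apply/esym/eqP; rewrite pnatr_eq0 cards_eq0; apply/eqP/setP => C; rewrite !inE.
apply/negP => /andP [_ /andP [/existsP [w /andP [_ sw]] _]].
by have := inactive_all w HA; lra.
Qed.

Lemma act_s (P : V -> R) k s C :
  T src dst c P tb k <= s -> s < T src dst c P tb k.+1 ->
  act src dst c P tb k C = activeAt P s C.
Proof. by move=> h1 h2; apply: activeAt_const => w; apply: const_ts. Qed.

Lemma rho_le k j s e : coarse (F1 k) (F2 j) ->
  T1 k <= s -> (A1 k -> s < T1 k.+1) -> T2 j <= s -> (A2 j -> s < T2 j.+1) ->
  crossing (F2 j) e -> rho1 k e <= rho2 j e.
Proof.
move=> co h1 h2 h3 h4 cr.
case: (boolP (A1 k)) => HA1; last by rewrite /rho (negPf HA1) rho_ge0.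
have h2' := h2 HA1.
case: (boolP (A2 j)) => HA2; last first.
  move: HA1; rewrite AE => /existsP [w hw]; rewrite (const_ts w h1 h2') in hw.
  by have := inactive_all w HA2; have := H1 w; lra.
have h4' := h4 HA2.
have cr1 := coarse_crossing co cr.
rewrite (rho_cross HA1 cr1) (rho_cross HA2 cr) ler_nat /rate.
rewrite !(act_s _ h1 h2') !(act_s _ h3 h4').
have l v : (activeAt ts s (cmp (F1 k) v) <= activeAt ts' s (cmp (F2 j) v))%N.
  by case: (boolP (activeAt ts s _)) => // /(act_lift co) ->.
exact: leq_add.
Qed.

Lemma advance_time k j s s2 : Inv k j s -> s <= s2 ->
  (A1 k -> s2 <= T1 k.+1) -> (A2 j -> s2 <= T2 j.+1) -> W k j s2.
Proof.
move=> [[[h1 _ h3 _ [kb jb]] co Hl Ha] [h2 h4]] ss2 b1 b2.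
have d0 : 0 <= s2 - s by rewrite subr_ge0.
split => //.
- by split => //; [exact: le_trans ss2 | exact: le_trans ss2].
- move=> e cr; have := Hl e cr; have := rho_le co h1 h2 h3 h4 cr => hr.
  have := ler_wpM2l d0 hr; lra.
- have n1 := nar_Ns h1 h2; rewrite -/(nar1 k) in n1.
  have hn1 : 0 <= nar1 k by rewrite n1 ler0n.
  suff: (s2 - s) * nar2 j <= (s2 - s) * nar1 k + (Num.min s2 tau - Num.min s tau) by lra.
  case: (boolP (A2 j)) => HA2; last first.
    rewrite /nar2 (negPf HA2) mulr0.
    have : Num.min s tau <= Num.min s2 tau by rewrite le_min !ge_min ss2 lexx !orbT.
    have := mulr_ge0 d0 hn1; lra.
  have n2 := nar_Ns h3 h4; rewrite -/(nar2 j) in n2.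
  have hN := @na_cmp _ _ s co.
  have hN' : nar2 j <= nar1 k + (((s < tau)%R : bool) : nat)%:R by rewrite n1 n2 -natrD ler_nat.
  case: (boolP (s < tau)) => st; last first.
    rewrite (negPf st) /= addr0 in hN'; rewrite -leNgt in st.
    have -> : Num.min s2 tau = tau by rewrite minEle; case: leP => //; lra.
    have -> : Num.min s tau = tau by rewrite minEle; case: leP => //; lra.
    by rewrite subrr addr0; apply: ler_wpM2l.
  rewrite st /= in hN'.
  have lt2 : T2 j < ts' q by rewrite H3; lra.
  have := dd_ts lt2; rewrite H3 => hd; have := TS src dst c ts' tb j => eT.
  have s2t : s2 <= tau by have := b2 HA2; lra.
  have -> : Num.min s2 tau = s2 by rewrite minEle; case: leP => //; lra.
  have -> : Num.min s tau = s by rewrite minEle; case: leP => //; lra.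
  have := ler_wpM2l d0 hN'; lra.
Qed.

Lemma advance2 k j s : W k j s -> A2 j -> s = T2 j.+1 -> W k j.+1 s.
Proof.
move=> [[h1 b1 h3 b3 [kb jb]] co Hl Ha] HA2 es.
have jl := term c_ge0 HA2.
have sub : F2 j \subset F2 j.+1 by rewrite /Fk F0S; apply: addTight_sub.
have eT := TS src dst c ts' tb j.
split.
- split; [by [] | by [] | by rewrite es | by move=> _; rewrite es; apply: T_mono | by split].
- exact: coarse_trans co (coarse_sub sub).
- move=> e cr; have := Hl e (coarse_crossing (coarse_sub sub) cr).
  rewrite es subrr mul0r addr0 loadS eT; lra.
- have [_ _ _ ->] := stepE src dst c ts' tb j; rewrite es subrr mul0r addr0 -/(nar2 j) -/(add2 j).
  move: Ha; rewrite es eT; lra.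
Qed.

Lemma advance1 k j s : W k j s -> A1 k -> s = T1 k.+1 -> (A2 j -> s < T2 j.+1) -> W k.+1 j s.
Proof.
move=> [[h1 b1 h3 b3 [kb jb]] co Hl Ha] HA1 es s2.
have kl := term c_ge0 HA1.
have eT := TS src dst c ts tb k.
split.
- split; [by rewrite es | by move=> _; rewrite es; apply: T_mono | by [] | by [] | by split].
- apply: coarse_edges => e /addTight_in; rewrite F0S => /orP [eF|ti].
    by apply: co; rewrite -comp_eq; apply/negPn/noncross_in.
  rewrite -comp_eq; apply/negPn/negP => cr.
  have l1 := Hl e cr.
  have l2 : load (Y2 j) e + (s - T2 j) * rho2 j e < c e.
    apply: load_inside => //; case: (boolP (A2 j)) => HA2; [left; exact: s2 | by right].
  move: ti; rewrite /Defs.tight loadS => /eqP; rewrite es eT in l1 l2 *; lra.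
- move=> e cr; have := Hl e cr.
  rewrite es subrr mul0r addr0 loadS eT; lra.
- have [_ _ _ ->] := stepE src dst c ts tb k; rewrite es subrr mul0r addr0 -/(nar1 k) -/(add1 k).
  move: Ha; rewrite es eT; lra.
Qed.

Lemma init_inv : Inv 0 0 0.
Proof.
have eF : F1 0 = F2 0 by [].
have p1 : A1 0 -> 0 < T1 1 by move=> HA; rewrite TS (T0 src dst c ts tb) add0r; apply: dd_pos.
have p2 : A2 0 -> 0 < T2 1 by move=> HA; rewrite TS (T0 src dst c ts' tb) add0r; apply: dd_pos.
have t1 : T1 0 <= 0 by rewrite (T0 src dst c ts tb).
have t2 : T2 0 <= 0 by rewrite (T0 src dst c ts' tb).
have q1 : A1 0 -> 0 <= T1 1 by move/p1/ltW.
have q2 : A2 0 -> 0 <= T2 1 by move/p2/ltW.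
split => //; split.
- by split.
- by rewrite eF.
- move=> e _; rewrite (T0 src dst c ts tb) (T0 src dst c ts' tb) (Y0 src dst c ts tb) (Y0 src dst c ts' tb).
  by rewrite !load0 subrr !mul0r.
- rewrite (T0 src dst c ts tb) (T0 src dst c ts' tb) (add0' src dst c ts tb) (add0' src dst c ts' tb).
  by rewrite subrr !mul0r !addr0 add0r minEle tau_ge0.
Qed.

Lemma normalize k j s : W k j s -> exists k' j', [/\ Inv k' j' s,
  (k <= k' <= k.+1)%N, (j <= j' <= j.+1)%N,
  (A1 k -> s = T1 k.+1 -> k' = k.+1) & (A2 j -> s = T2 j.+1 -> j' = j.+1)].
Proof.
move=> Wk.
have [j' [Wj jb1 jb2 strict2]] : exists j', [/\ W k j' s, (j <= j' <= j.+1)%N,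
     (A2 j -> s = T2 j.+1 -> j' = j.+1) & (A2 j' -> s < T2 j'.+1)].
  case: (boolP (A2 j && (s == T2 j.+1))) => [/andP [HA /eqP es]|nh].
    exists j.+1; split => //; first exact: advance2.
    - by rewrite leqnSn ltnSn.
    - by move=> HA'; rewrite TS es ltrDl dd_pos.
  exists j; split => //; first by apply/andP; split; [exact: leqnn | exact: leqnSn].
  - by move=> HA es; move: nh; rewrite HA es eqxx.
  - move=> HA; case: Wk => [[_ _ _ b _] _ _ _]; rewrite lt_neqAle b // andbT.
    by move: nh; rewrite HA.
case: (boolP (A1 k && (s == T1 k.+1))) => [/andP [HA /eqP es]|nh].
  exists k.+1, j'; split => //; last by rewrite leqnSn ltnSn.
  split; first exact: advance1.
  by split => // HA'; rewrite TS es ltrDl dd_pos.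
exists k, j'; split => //.
- split => //; split => // HA; case: Wj => [[_ b _ _ _] _ _ _]; rewrite lt_neqAle b // andbT.
  by move: nh; rewrite HA.
- by apply/andP; split; [exact: leqnn | exact: leqnSn].
- by move=> HA es; move: nh; rewrite HA es eqxx.
Qed.

Lemma loop n : forall k j s, ((3 * #|V| - k) + (3 * #|V| - j) <= n)%N -> Inv k j s ->
  exists k' j', [/\ ~~ A1 k', ~~ A2 j', (k' <= 3 * #|V|)%N, (j' <= 3 * #|V|)%N &
     add2 j' <= add1 k' + tau].
Proof.
elim: n => [|n IH] k j s hn [Wk [s1 s2]].
all: case: (boolP (A1 k || A2 j)) => HA; last first.
1,3: move: HA; rewrite negb_or => /andP [n1 n2]; exists k, j;
     case: Wk => [[_ _ _ _ [kb jb]] _ _ Ha]; split => //;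
     move: Ha; rewrite /nar1 /nar2 (negPf n1) (negPf n2) !mulr0 !addr0;
     (have hm : Num.min s tau <= tau by rewrite ge_min lexx orbT); lra.
- exfalso; case: Wk => [[_ _ _ _ [kb jb]] _ _ _].
  case/orP: HA => HA; [have := term c_ge0 HA | have := term c_ge0 HA]; lia.
set s' := if A1 k then (if A2 j then Num.min (T1 k.+1) (T2 j.+1) else T1 k.+1) else T2 j.+1.
have ss : s <= s'.
  rewrite /s'; case: (boolP (A1 k)) => H1k; case: (boolP (A2 j)) => H2j /=.
  - by rewrite le_min !ltW ?s1 ?s2.
  - exact/ltW/s1.
  - exact/ltW/s2.
  - by move: HA; rewrite (negPf H1k) (negPf H2j).
have b1 : A1 k -> s' <= T1 k.+1.
  by move=> H1k; rewrite /s' H1k; case: (A2 j); rewrite ?ge_min lexx.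
have b2 : A2 j -> s' <= T2 j.+1.
  by move=> H2j; rewrite /s' H2j; case: (A1 k); rewrite ?ge_min lexx ?orbT.
have [k' [j' [Iv kk jj e1 e2]]] := normalize (advance_time (conj Wk (conj s1 s2)) ss b1 b2).
have [[[_ _ _ _ [kb jb]] _ _ _] _] := Iv.
have [[[_ _ _ _ [kb0 jb0]] _ _ _] _] := (conj Wk (conj s1 s2)).
have adv : (k' = k.+1 /\ A1 k) \/ (j' = j.+1 /\ A2 j).
  rewrite /s' in e1 e2; case: (boolP (A1 k)) => H1k; case: (boolP (A2 j)) => H2j.
  - move: e1 e2; rewrite H1k H2j minEle; case: leP => _ e1 e2.
      by left; split => //; apply: e1.
    by right; split => //; apply: e2.
  - by left; split => //; apply: e1 => //; rewrite H1k (negPf H2j).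
  - by right; split => //; apply: e2 => //; rewrite (negPf H1k).
  - by move: HA; rewrite (negPf H1k) (negPf H2j).
apply: (IH k' j' s') => //.
case: adv => [[ek HAk]|[ej HAj]].
  have := term c_ge0 HAk; move: hn kk jj; rewrite ek; lia.
have := term c_ge0 HAj; move: hn kk jj; rewrite ej; lia.
Qed.

End Coupling.

Theorem mainTheorem14 (R : realType) (V E : finType) (src dst : E -> V) (c : E -> R)
    (t tstar : V -> R) (q : V) (tau : R) :
  (forall e, 0 <= c e) ->
  (forall v, 0 <= t v) ->
  (forall v, t v <= tstar v) ->
  tstar q <= tau ->
  Loss src dst c t tstar q tau <= tau.
Proof.
move=> hc ht htt htau.
set ts' := boost tstar q tau.
have H1 : forall w, tstar w <= ts' w.
  by move=> w; rewrite /ts' /boost; case: eqP => [->|]. 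
have H2 : forall w, w != q -> ts' w = tstar w.
  by move=> w /negPf wq; rewrite /ts' /boost wq.
have H3 : ts' q = tau by rewrite /ts' /boost eqxx.
have tau0 : 0 <= tau by have := ht q; have := htt q; lra.
have [k [j [n1 n2 kb jb hadd]]] :=
  @loop R V E src dst c hc tstar ts' t q tau H1 H2 H3 tau0 (6 * #|V|) 0 0 0
    ltac:(lia) (@init_inv R V E src dst c hc tstar ts' t tau tau0).
rewrite /Loss /y_add !run_add.
have kb' : (k <= (3 * #|V|).+1)%N by lia.
have jb' : (j <= (3 * #|V|).+1)%N by lia.
have [_ -> _] := inactive_after n1 kb'.
have [_ -> _] := inactive_after n2 jb'.
lra.
Qed.
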